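(* Let $\mathcal{F}$ be a finite forest with at least one vertex and without isolated vertices. Then $\mathcal{NC}(\mathcal{F})$ is vertex decomposable if and only if $\mathcal{F}$ is connected and has at most two internal vertices.
   Context: An internal vertex of a forest is a vertex of degree greater than $1$. For a finite simple graph $H$, the non-cover complex $\mathcal{NC}(H)$ is the simplicial complex whose simplices are the subsets $S\subseteq V(H)$ such that $V(H)\setminus S$ contains both endpoints of some edge of $H$. For a simplicial complex $K$ and a vertex $v$, $\mathrm{lk}(v,K)=\{\tau\in K: v\notin\tau,\ \tau\cup\{v\}\in K\}$ and $\mathrm{del}(v,K)=\{\tau\in K: v\notin\tau\}$. A simplicial complex $K$ is vertex decomposable if $K$ is a simplex (the set of all subsets of a finite set, including $\{\emptyset\}$), or $K$ contains a vertex $v$ such that (i) both $\mathrm{lk}(v,K)$ and $\mathrm{del}(v,K)$ are vertex decomposable, and (ii) every facet (maximal simplex) of $\mathrm{del}(v,K)$ is a facet of $K$. *)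

(* Defs.v *)
From mathcomp Require Import all_boot.
Set Implicit Arguments. Unset Strict Implicit. Unset Printing Implicit Defensive.

Definition simple_graph (T : finType) (e : rel T) : Prop :=
  symmetric e /\ irreflexive e.

Definition nbhd (T : finType) (e : rel T) (v : T) : {set T} := [set w | e v w].
Definition degree (T : finType) (e : rel T) (v : T) : nat := #|nbhd e v|.

Definition is_forest (T : finType) (e : rel T) : Prop :=
  forall p : seq T, uniq p -> 3 <= size p -> ~~ cycle e p.

Definition connected_graph (T : finType) (e : rel T) : Prop :=
  forall x y : T, connect e x y.

Definition no_isolated (T : finType) (e : rel T) : Prop :=
  forall v : T, 0 < degree e v.

Definition internal_vertices (T : finType) (e : rel T) : {set T} :=
  [set v | 1 < degree e v].

(* Simplicial complexes represented by their set of faces. *)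
Definition complex (T : finType) := {set {set T}}.

Definition non_cover_complex (T : finType) (e : rel T) : complex T :=
  [set S : {set T} | [exists x, exists y, [&& e x y, x \notin S & y \notin S]]].

Definition link (T : finType) (v : T) (K : complex T) : complex T :=
  [set tau in K | (v \notin tau) && (v |: tau \in K)].

Definition deletion (T : finType) (v : T) (K : complex T) : complex T :=
  [set tau in K | v \notin tau].

Definition is_simplex (T : finType) (K : complex T) : Prop :=
  exists A : {set T}, K = powerset A.

Definition is_facet (T : finType) (K : complex T) (F : {set T}) : bool :=
  (F \in K) && [forall G in K, (F \subset G) ==> (G == F)].

Inductive vertex_decomposable (T : finType) : complex T -> Prop :=
  | vd_simplex (K : complex T) : is_simplex K -> vertex_decomposable K
  | vd_shed (K : complex T) (v : T) :
      [set v] \in K ->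
      vertex_decomposable (link v K) ->
      vertex_decomposable (deletion v K) ->
      (forall F, is_facet (deletion v K) F -> is_facet K F) ->
      vertex_decomposable K.

(* Main.v *)
Require Import Defs.
From mathcomp Require Import all_boot.
Set Implicit Arguments. Unset Strict Implicit. Unset Printing Implicit Defensive.

Definition dclosed (T : finType) (K : complex T) :=
  forall S U : {set T}, S \in K -> U \subset S -> U \in K.

Definition lkS (T : finType) (s : {set T}) (K : complex T) : complex T :=
  [set t in K | (t \subset ~: s) && (t :|: s \in K)].

Definition adjr (T : finType) (K : complex T) : rel {set T} :=
  fun F G => [&& is_facet K F, is_facet K G & #|F :\: G| <= 1].
Definition sadj (T : finType) (K : complex T) : rel {set T} :=
  fun F G => adjr K F G || adjr K G F.
Definition SC (T : finType) (K : complex T) :=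
  forall F G, is_facet K F -> is_facet K G -> connect (sadj K) F G.

Lemma facetP (T : finType) (K : complex T) (F : {set T}) :
  reflect (F \in K /\ forall G, G \in K -> F \subset G -> G = F) (is_facet K F).
Proof.
apply: (iffP andP) => [[FK /forall_inP H]|[FK H]]; split => //.
- by move=> G GK FG; apply/eqP; move: (H G GK); rewrite FG.
- by apply/forall_inP => G GK; apply/implyP => FG; rewrite (H G GK FG).
Qed.

Lemma facet_exists (T : finType) (K : complex T) (S : {set T}) :
  S \in K -> exists F, is_facet K F /\ S \subset F.
Proof.
move=> SK.
have P0 : [pred F : {set T} | (F \in K) && (S \subset F)] S by rewrite /= SK subxx.
case: (@arg_maxnP _ S [pred F : {set T} | (F \in K) && (S \subset F)] (fun F : {set T} => #|F|) P0) => F /andP [FK SF] Hmax.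
exists F; split => //; apply/facetP; split => // G GK FG.
apply/eqP; rewrite eq_sym eqEcard FG /=.
by apply: (Hmax G); rewrite /= GK (subset_trans SF FG).
Qed.

Lemma connect_map (T1 T2 : finType) (e1 : rel T1) (e2 : rel T2) (f : T1 -> T2) :
  (forall x y, e1 x y -> e2 (f x) (f y)) ->
  forall x y, connect e1 x y -> connect e2 (f x) (f y).
Proof.
move=> h x y /connectP [p pth ->]; elim: p x pth => [|z p IH] x /=.
  by rewrite connect0.
case/andP => exz pz; exact: connect_trans (connect1 (h _ _ exz)) (IH _ pz).
Qed.

Lemma sadj_sym (T : finType) (K : complex T) : symmetric (sadj K).
Proof. by move=> F G; rewrite /sadj orbC. Qed.

Lemma setUDK' (T : finType) (X s : {set T}) : X \subset ~: s -> (X :|: s) :\: s = X.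
Proof.
move/subsetP=> H; apply/setP => x; rewrite !inE.
case xs: (x \in s) => /=; last by rewrite orbF.
by apply/esym/negbTE/negP => xX; move: (H x xX); rewrite inE xs.
Qed.

Lemma setDUK' (T : finType) (G s : {set T}) : s \subset G -> (G :\: s) :|: s = G.
Proof.
move/subsetP=> H; apply/setP => x; rewrite !inE.
by case xs: (x \in s) => /=; rewrite ?orbT ?orbF ?andbT // (H x xs).
Qed.

Lemma lkS_facet_of_facet (T : finType) (K : complex T) (G s : {set T}) :
  dclosed K -> is_facet K G -> s \subset G -> is_facet (lkS s K) (G :\: s).
Proof.
move=> dK /facetP [GK Gmax] sG; apply/facetP; split.
  rewrite inE (dK _ _ GK (subsetDl G s)) setDUK' //= GK andbT.
  by apply/subsetP => x; rewrite !inE => /andP [].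
move=> H; rewrite inE => /and3P [HK Hs HsK] GH.
have : H :|: s = G.
  apply: Gmax HsK _; rewrite -{1}(setDUK' sG); exact: setSU.
by move=> <-; rewrite setUDK'.
Qed.

Lemma lkS_sub (T : finType) (K : complex T) (s t : {set T}) :
  t \in lkS s K -> [/\ t \in K, t \subset ~: s & t :|: s \in K].
Proof. by rewrite inE => /and3P []. Qed.


Lemma dclosed_link (T : finType) (K : complex T) v : dclosed K -> dclosed (link v K).
Proof.
move=> dK S U; rewrite !inE => /and3P [SK vS vSK] US.
rewrite (dK _ _ SK US) /=; apply/andP; split.
  by apply/negP => vU; move/negP: vS; apply; move/subsetP: US; apply.
by apply: dK vSK _; apply: setUS.
Qed.

Lemma dclosed_del (T : finType) (K : complex T) v : dclosed K -> dclosed (deletion v K).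
Proof.
move=> dK S U; rewrite !inE => /andP [SK vS] US.
rewrite (dK _ _ SK US) /=.
by apply/negP => vU; move/negP: vS; apply; move/subsetP: US; apply.
Qed.

Lemma del_sub (T : finType) (K : complex T) v S : S \in deletion v K -> S \in K.
Proof. by rewrite inE => /andP []. Qed.

Lemma lkS_del_to_K (T : finType) (K : complex T) v (s A : {set T}) :
  dclosed K -> v \notin s ->
  (forall F, is_facet (deletion v K) F -> is_facet K F) ->
  is_facet (lkS s (deletion v K)) A -> is_facet (lkS s K) A.
Proof.
move=> dK vs Hfac /facetP [AL Amax].
have [AD As AsD] := lkS_sub AL.
have AsF : is_facet (deletion v K) (A :|: s).
  apply/facetP; split => // H HD AsH.
  have sH : s \subset H by apply: subset_trans AsH; apply: subsetUr.
  have HsL : H :\: s \in lkS s (deletion v K).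
    rewrite inE (dclosed_del dK HD (subsetDl H s)) setDUK' // HD andbT /=.
    by apply/subsetP => x; rewrite !inE => /andP [].
  have AHs : A \subset H :\: s.
    rewrite subsetD; apply/andP; split.
      by apply: subset_trans AsH; apply: subsetUl.
    rewrite -setI_eq0; apply/eqP/setP => x; rewrite !inE.
    by apply/negbTE/negP => /andP [xA xs]; move/subsetP: As => /(_ x xA); rewrite inE xs.
  by rewrite -(Amax _ HsL AHs) setDUK'.
have /facetP [AsK AsKmax] := Hfac _ AsF.
apply/facetP; split.
  by rewrite inE (del_sub AD) As AsK.
move=> H HL AH; have [HK Hs HsK] := lkS_sub HL.
have : H :|: s = A :|: s by apply: AsKmax HsK _; apply: setSU.
by move=> E; rewrite -(setUDK' Hs) E setUDK'.
Qed.

Lemma lkS_K_to_del (T : finType) (K : complex T) v (s A : {set T}) :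
  v \notin s -> v \notin A -> is_facet (lkS s K) A -> is_facet (lkS s (deletion v K)) A.
Proof.
move=> vs vA /facetP [AL Amax]; have [AK As AsK] := lkS_sub AL.
apply/facetP; split.
  rewrite !inE AK vA As AsK /=; by rewrite negb_or vA vs.
move=> H HL AH; have [HD Hs HsD] := lkS_sub HL.
by apply: Amax AH; rewrite inE (del_sub HD) Hs (del_sub HsD).
Qed.

Lemma lkS_link_eq (T : finType) (K : complex T) v (s : {set T}) :
  dclosed K -> v \in s -> lkS s K = lkS (s :\ v) (link v K).
Proof.
move=> dK vs; apply/setP => t; rewrite !inE.
have E : v |: (t :|: s :\ v) = t :|: s.
  apply/setP => x; rewrite !inE; case: (eqVneq x v) => [->|] //=.
  by rewrite vs orbT.
rewrite E.
case tK: (t \in K) => //=.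
case tsK: (t :|: s \in K); rewrite ?andbF ?andbT //=.
apply/idP/idP.
- move/subsetP=> H.
  have vt : v \notin t by apply/negP => /H; rewrite inE vs.
  rewrite vt /= (dK _ _ tsK); last first.
    by apply/subsetP => x; rewrite !inE => /orP [/eqP ->|->]; rewrite ?vs ?orbT.
  rewrite (dK _ _ tsK); last first.
    by apply/subsetP => x; rewrite !inE => /orP [->|/andP [_ ->]]; rewrite ?orbT.
  rewrite (negbTE vt) eqxx /= andbT.
  by apply/subsetP => x xt; move: (H x xt); rewrite !inE => /negbTE ->; rewrite andbF.
- case/and4P => /andP [vt _] Ht _ _; apply/subsetP => x xt.
  move/subsetP: Ht => /(_ x xt); rewrite !inE negb_and negbK.
  by case/orP => // /eqP xv; move: vt; rewrite -xv xt.
Qed.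


Lemma simplex_lk_facet (T : finType) (A s F : {set T}) :
  is_facet (lkS s (powerset A)) F -> F = A :\: s.
Proof.
move=> /facetP [FL Fmax]; have [FA Fs FsA] := lkS_sub FL.
move: FA FsA; rewrite !powersetE subUset => FA /andP [_ sA].
apply/esym/Fmax.
  rewrite inE powersetE subsetDl setDUK' // powersetE subxx andbT /=.
  by apply/subsetP => x; rewrite !inE => /andP [].
rewrite subsetD FA /=; rewrite -setI_eq0; apply/eqP/setP => x; rewrite !inE.
by apply/negbTE/negP => /andP [xF xs]; move/subsetP: Fs => /(_ x xF); rewrite inE xs.
Qed.

Lemma VD_SC (T : finType) (K : complex T) :
  vertex_decomposable K -> dclosed K -> forall s, SC (lkS s K).
Proof.
elim=> {K} [K [A ->]|K v vK _ IHl _ IHd Hfac] dK s.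
  by move=> F G /simplex_lk_facet -> /simplex_lk_facet ->; rewrite connect0.
case: (boolP (v \in s)) => vs.
  rewrite (lkS_link_eq dK vs); exact: IHl (@dclosed_link _ K v dK) _.
set L := lkS s K.
have dD := @dclosed_del _ K v dK.
have toL : forall F G, sadj (lkS s (deletion v K)) F G -> sadj L F G.
  move=> F G; rewrite /sadj /adjr.
  by case/orP => /and3P [f1 f2 c]; rewrite !(lkS_del_to_K dK vs Hfac f1) !(lkS_del_to_K dK vs Hfac f2) c ?orbT.
have step : forall A, is_facet L A -> exists A',
    is_facet (lkS s (deletion v K)) A' /\ connect (sadj L) A A'.
  move=> A AF; case: (boolP (v \in A)) => vA; last first.
    by exists A; split; [exact: lkS_K_to_del|exact: connect0].
  have [AL _] := facetP _ _ AF; have [AK As AsK] := lkS_sub AL.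
  have inD : (A :\ v) :|: s \in deletion v K.
    rewrite inE !inE negb_or eqxx /= vs andbT.
    by apply: dK AsK _; apply: setSU; apply: subsetDl.
  have [G [GF AG]] := facet_exists inD.
  have sG : s \subset G by apply: subset_trans AG; apply: subsetUr.
  have G'F := lkS_facet_of_facet dD GF sG.
  exists (G :\: s); split => //.
  apply: connect1; rewrite /sadj /adjr AF (lkS_del_to_K dK vs Hfac G'F) /=.
  suff : A :\: (G :\: s) \subset [set v].
    by move/subset_leq_card; rewrite cards1 => ->.
  apply/subsetP => x; rewrite !inE negb_and negbK => /andP [H xA].
  have xs : x \notin s by move/subsetP: As => /(_ x xA); rewrite inE.
  rewrite (negbTE xs) /= in H.
  apply/negPn/negP => xv; move/negP: H; apply.
  by move/subsetP: AG; apply; rewrite !inE xv xA.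
move=> A B AF BF.
have [A' [A'F AA']] := step A AF; have [B' [B'F BB']] := step B BF.
apply: connect_trans AA' _; rewrite (sym_connect_sym (@sadj_sym _ L)).
apply: connect_trans BB' _; rewrite (sym_connect_sym (@sadj_sym _ L)).
have := IHd dD s A' B' A'F B'F.
move=> H; apply: (connect_sub _ H) => x y /toL; exact: connect1.
Qed.


Lemma NCP (T : finType) (e : rel T) (S : {set T}) :
  reflect (exists x y, [/\ e x y, x \notin S & y \notin S]) (S \in non_cover_complex e).
Proof.
rewrite inE; apply: (iffP existsP) => [[x /existsP [y /and3P [h1 h2 h3]]]|[x [y [h1 h2 h3]]]].
  by exists x, y.
by exists x; apply/existsP; exists y; rewrite h1 h2 h3.
Qed.

Lemma dclosed_NC (T : finType) (e : rel T) : dclosed (non_cover_complex e).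
Proof.
move=> S U /NCP [x [y [h1 h2 h3]]] /subsetP US; apply/NCP; exists x, y; split => //.
  by apply/negP => /US; apply/negP.
by apply/negP => /US; apply/negP.
Qed.

Definition es (T : finType) (e : rel T) (s : {set T}) : rel T :=
  [rel x y | [&& e x y, x \notin s & y \notin s]].

Lemma NC_lk_mk (T : finType) (e : rel T) (s : {set T}) u w :
  simple_graph e -> e u w -> u \notin s -> w \notin s ->
  is_facet (lkS s (non_cover_complex e)) (~: (s :|: [set u; w])).
Proof.
move=> [sym irr] euw us ws; apply/facetP; split.
  rewrite inE; apply/and3P; split.
  - by apply/NCP; exists u, w; rewrite !inE !eqxx !orbT.
  - by apply/subsetP => x; rewrite !inE negb_or => /andP [].
  - by apply/NCP; exists u, w; rewrite !inE !eqxx !orbT /= us ws.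
move=> H HL FH; have [HK Hs /NCP [x [y [exy xH yH]]]] := lkS_sub HL.
have hx : (x == u) || (x == w).
  move: xH; rewrite inE negb_or => /andP [xH xs].
  apply/negPn/negP => xo; move/negP: xH; apply; move/subsetP: FH; apply.
  by rewrite !inE negb_or xs.
have hy : (y == u) || (y == w).
  move: yH; rewrite inE negb_or => /andP [yH ys].
  apply/negPn/negP => yo; move/negP: yH; apply; move/subsetP: FH; apply.
  by rewrite !inE negb_or ys.
have xy : x != y by apply/eqP => E; move: exy; rewrite E irr.
have [uH wH] : u \notin H /\ w \notin H.
  move: xH yH; rewrite !inE !negb_or => /andP [xH _] /andP [yH _].
  by case/orP: hx => /eqP Ex; case/orP: hy => /eqP Ey; subst;
    rewrite ?eqxx in xy; split.
apply/eqP; rewrite eqEsubset FH andbT; apply/subsetP => z zH.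
rewrite !inE !negb_or; apply/and3P; split.
- by move/subsetP: Hs => /(_ z zH); rewrite inE.
- by apply/eqP => Ez; move: uH; rewrite -Ez zH.
- by apply/eqP => Ez; move: wH; rewrite -Ez zH.
Qed.

Lemma NC_lk_form (T : finType) (e : rel T) (s F : {set T}) u w :
  simple_graph e -> is_facet (lkS s (non_cover_complex e)) F ->
  e u w -> u \notin F -> w \notin F -> u \notin s -> w \notin s ->
  F = ~: (s :|: [set u; w]).
Proof.
move=> sg FF euw uF wF us ws; have /facetP [FL Fmax] := FF.
have [_ Fs _] := lkS_sub FL.
have [HL _] := facetP _ _ (NC_lk_mk sg euw us ws).
apply/esym/Fmax => //.
apply/subsetP => z zF; rewrite !inE !negb_or; apply/and3P; split.
- by move/subsetP: Fs => /(_ z zF); rewrite inE.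
- by apply/eqP => Ez; move: uF; rewrite -Ez zF.
- by apply/eqP => Ez; move: wF; rewrite -Ez zF.
Qed.

Lemma NC_lk_edge (T : finType) (e : rel T) (s F : {set T}) :
  is_facet (lkS s (non_cover_complex e)) F ->
  exists u w, [/\ e u w, u \notin F, w \notin F, u \notin s & w \notin s].
Proof.
move=> /facetP [FL _]; have [_ _ /NCP [x [y [exy xH yH]]]] := lkS_sub FL.
move: xH yH; rewrite !inE !negb_or => /andP [? ?] /andP [? ?].
by exists x, y.
Qed.


Definition Pinv (T : finType) (e : rel T) (s : {set T}) (r : T) (F : {set T}) :=
  exists u w, [/\ e u w, u \notin F, w \notin F, (u \notin s) && (w \notin s) & connect (es e s) r u].

Lemma NC_step (T : finType) (e : rel T) (s : {set T}) r F G :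
  simple_graph e -> sadj (lkS s (non_cover_complex e)) F G -> Pinv e s r F -> Pinv e s r G.
Proof.
move=> sg H [u [w [euw uF wF /andP [us ws] cu]]].
have [sym irr] := sg.
have [FF GF c] : [/\ is_facet (lkS s (non_cover_complex e)) F,
    is_facet (lkS s (non_cover_complex e)) G & (#|F :\: G| <= 1) || (#|G :\: F| <= 1)].
  by case/orP: H => /and3P [h1 h2 h3]; rewrite h1 h2 h3 ?orbT.
have [u' [w' [euw' uG wG us' ws']]] := NC_lk_edge GF.
have EF := NC_lk_form sg FF euw uF wF us ws.
have EG := NC_lk_form sg GF euw' uG wG us' ws'.
have uw : u != w by apply/eqP => E; move: euw; rewrite E irr.
have uw' : u' != w' by apply/eqP => E; move: euw'; rewrite E irr.
have key : [|| u' == u, u' == w, w' == u | w' == w].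
  apply/negPn/negP; rewrite !negb_or => /and4P [a1 a2 a3 a4].
  case/orP: c.
  - have : [set u'; w'] \subset F :\: G.
      apply/subsetP => z; rewrite !inE => /orP [] /eqP ->; rewrite EF EG !inE !eqxx /= ?orbT /=.
        by rewrite (negbTE us') (negbTE a1) (negbTE a2).
      by rewrite (negbTE ws') (negbTE a3) (negbTE a4).
    by move/subset_leq_card; rewrite cards2 uw' => /leq_trans H1 /H1.
  - have : [set u; w] \subset G :\: F.
      apply/subsetP => z; rewrite !inE => /orP [] /eqP ->; rewrite EF EG !inE !eqxx /= ?orbT /=.
        by rewrite (negbTE us) eq_sym (negbTE a1) eq_sym (negbTE a3).
      by rewrite (negbTE ws) eq_sym (negbTE a2) eq_sym (negbTE a4).
    by move/subsetP: (subxx [set u; w]) => _; move/subset_leq_card; rewrite cards2 uw => /leq_trans H1 /H1.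
have cuw : connect (es e s) r w.
  by apply: connect_trans cu (connect1 _); rewrite /es /= euw us ws.
have cwu : connect (es e s) r u := cu.
have ew'u' : e w' u' by rewrite sym.
have g1 : (u' \notin s) && (w' \notin s) by rewrite us' ws'.
have g2 : (w' \notin s) && (u' \notin s) by rewrite us' ws'.
case/or4P: key => /eqP E.
- by exists u', w'; split => //; rewrite E.
- by exists u', w'; split => //; rewrite E.
- by exists w', u'; split => //; rewrite E.
- by exists w', u'; split => //; rewrite E.
Qed.

Lemma NC_conn_inv (T : finType) (e : rel T) (s : {set T}) r F G :
  simple_graph e -> connect (sadj (lkS s (non_cover_complex e))) F G -> Pinv e s r F -> Pinv e s r G.
Proof.
move=> sg /connectP [p pth ->]; elim: p F pth => [|z p IH] F //= /andP [h1 h2] PF.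
by apply: IH h2 _; apply: NC_step h1 PF.
Qed.

Lemma NC_SC_conn (T : finType) (e : rel T) (s : {set T}) u1 w1 u2 w2 :
  simple_graph e -> SC (lkS s (non_cover_complex e)) ->
  e u1 w1 -> e u2 w2 -> u1 \notin s -> w1 \notin s -> u2 \notin s -> w2 \notin s ->
  connect (es e s) u1 u2.
Proof.
move=> sg HSC e1 e2 a1 b1 a2 b2.
have F1 := NC_lk_mk sg e1 a1 b1; have F2 := NC_lk_mk sg e2 a2 b2.
have P1 : Pinv e s u1 (~: (s :|: [set u1; w1])).
  by exists u1, w1; split; rewrite ?a1 ?b1 ?connect0 // !inE !eqxx ?orbT.
have [u [w [euw uF wF /andP [us ws] cu]]] := NC_conn_inv sg (HSC _ _ F1 F2) P1.
move: uF; rewrite !inE negbK (negbTE us) /= => /orP [] /eqP E.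
  by rewrite -E.
apply: connect_trans cu (connect1 _); rewrite /es /= E b2 a2 andbT.
by have [sym _] := sg; rewrite andbT sym.
Qed.


Lemma closure_conn (T : finType) (f : rel T) (C : {set T}) x y :
  (forall a b, a \in C -> f a b -> b \in C) -> x \in C -> connect f x y -> y \in C.
Proof.
move=> cl xC /connectP [p pth ->]; elim: p x xC pth => [|z p IH] x xC //= /andP [h1 h2].
exact: IH (cl _ _ xC h1) h2.
Qed.

Lemma nbP (T : finType) (e : rel T) x : 0 < degree e x -> exists y, e x y.
Proof. by case/card_gt0P => y; rewrite inE => ?; exists y. Qed.

Lemma card_le1_eq (T : finType) (A : {set T}) x y :
  #|A| <= 1 -> x \in A -> y \in A -> x = y.
Proof.
move=> c xA yA; apply/eqP/negPn/negP => xy.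
have : [set x; y] \subset A by apply/subsetP => z; rewrite !inE => /orP [] /eqP ->.
by move/subset_leq_card; rewrite cards2 xy => /leq_trans /(_ c).
Qed.

Lemma two_nb_internal (T : finType) (e : rel T) z a b :
  e z a -> e z b -> a != b -> z \in internal_vertices e.
Proof.
move=> za zb ab; rewrite inE /degree; apply/card_gt1P; exists a, b.
by rewrite !inE za zb ab.
Qed.

Definition eI (T : finType) (e : rel T) : rel T :=
  [rel x y | [&& e x y, x \in internal_vertices e & y \in internal_vertices e]].

Lemma path_I (T : finType) (e : rel T) : symmetric e ->
  forall a p, uniq (a :: p) -> path e a p -> a \in internal_vertices e ->
  last a p \in internal_vertices e -> path (eI e) a p.
Proof.
move=> sym a p; elim: p a => [|y p IH] a //= /andP [ap up] /andP [eay pth] aI lI.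
have yI : y \in internal_vertices e.
  case: p IH up pth lI ap => [|y' p'] IH up pth lI ap //=.
  move: pth => /= /andP [eyy' _].
  apply: (@two_nb_internal _ _ y a y'); first by rewrite sym.
    done.
  apply/negP => /eqP E; move: ap; rewrite E !inE eqxx orbT.
  done.
rewrite /eI /= eay aI yI /=; exact: IH.
Qed.

Lemma eI_conn (T : finType) (e : rel T) a b : symmetric e -> connect e a b ->
  a \in internal_vertices e -> b \in internal_vertices e -> connect (eI e) a b.
Proof.
move=> sym /connectP [p pth ->] aI lI.
case: (shortenP pth) lI => p' pth' u' _ lI.
apply/connectP; exists p' => //; exact: path_I.
Qed.

Lemma deg2 (T : finType) (f : rel T) (I : {set T}) : symmetric f ->
  (forall a b, a \in I -> b \in I -> connect f a b) -> 2 < #|I| ->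
  exists x y1 y2, [/\ f x y1, f x y2 & y1 != y2].
Proof.
move=> sym conn cI.
have [a aI] : exists a, a \in I by apply/card_gt0P; apply: leq_trans cI.
have [b bI ba] : exists2 b, b \in I & b \notin [set a].
  apply/subsetPn/negP => /subset_leq_card; rewrite cards1 => H.
  by move: (leq_trans cI H).
set N := [set w | f a w].
case: (ltnP 1 #|N|) => [/card_gt1P [y1 [y2 [h1 h2 h3]]]|N1].
  by exists a, y1, y2; move: h1 h2; rewrite !inE => -> ->.
have [z zN] : exists z, z \in N.
  apply/set0Pn/negP => /eqP N0.
  suff : b \in [set a] by rewrite (negbTE ba).
  apply: (closure_conn _ (set11 a) (conn a b aI bI)) => x y; rewrite inE => /eqP -> fay.
  have : y \in N by rewrite inE.
  by rewrite N0 in_set0.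
set M := [set w | f z w].
case: (ltnP 1 #|M|) => [/card_gt1P [y1 [y2 [h1 h2 h3]]]|M1].
  by exists z, y1, y2; move: h1 h2; rewrite !inE => -> ->.
have [c cIn ca] : exists2 c, c \in I & c \notin [set a; z].
  apply/subsetPn/negP => /subset_leq_card; rewrite cards2 => H.
  by move: (leq_trans cI H); case: (a != z).
have aM : a \in M by rewrite inE sym; rewrite inE in zN.
suff : c \in [set a; z] by rewrite (negbTE ca).
apply: (closure_conn _ (setU11 a _) (conn a c aI cIn)) => x y; rewrite !inE => /orP [] /eqP -> fxy.
  by rewrite (card_le1_eq N1 zN (_ : y \in N)) ?eqxx ?orbT // inE.
by rewrite (card_le1_eq M1 aM (_ : y \in M)) ?eqxx ?orbT // inE.
Qed.

Lemma path_es_notin (T : finType) (e : rel T) (s : {set T}) a p :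
  path (es e s) a p -> forall z, z \in p -> z \notin s.
Proof.
elim: p a => [|y p IH] a //= /andP [h1 h2] z; rewrite inE => /orP [/eqP ->|zp].
  by move: h1; rewrite /es /= => /and3P [].
exact: IH h2 z zp.
Qed.

Lemma forest_contra (T : finType) (e : rel T) x y1 y2 :
  simple_graph e -> is_forest e -> e x y1 -> e x y2 -> y1 != y2 ->
  connect (es e [set x]) y1 y2 -> False.
Proof.
move=> [sym irr] fo e1 e2 y12 /connectP [p pth E].
case: (shortenP pth) E => p' pth' u' _ E.
have nx := path_es_notin pth'.
have y1x : y1 != x by apply/eqP => E1; move: e1; rewrite E1 irr.
have p'n : p' != [::] by apply/eqP => P; move: E y12; rewrite P /= => ->; rewrite eqxx.
have U : uniq (x :: y1 :: p').
  apply/andP; split; last exact: u'.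
  rewrite inE negb_or eq_sym y1x /=.
  by apply/negP => /nx; rewrite inE eqxx.
have S3 : 3 <= size (x :: y1 :: p') by case: p' p'n {pth pth' u' E nx U}.
have C : cycle e (x :: y1 :: p').
  rewrite /= e1 rcons_path (sub_path _ pth') /=; last by move=> a b /and3P [].
  by rewrite -E sym.
by move: (fo _ U S3); rewrite C.
Qed.


Lemma other_nb (T : finType) (e : rel T) y x :
  y \in internal_vertices e -> exists z, e y z /\ z != x.
Proof.
rewrite inE /degree => /card_gt1P [a [b [aN bN ab]]]; rewrite !inE in aN bN.
case: (eqVneq a x) => [E|ax]; last by exists a.
by exists b; split => //; rewrite -E eq_sym.
Qed.

Lemma onlyif (T : finType) (e : rel T) :
  simple_graph e -> is_forest e -> no_isolated e ->
  vertex_decomposable (non_cover_complex e) ->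
  connected_graph e /\ #|internal_vertices e| <= 2.
Proof.
move=> sg fo noiso vd; have [sym irr] := sg.
have SCall := VD_SC vd (@dclosed_NC _ e).
have conn : connected_graph e.
  move=> x y; have [x' ex] := nbP (noiso x); have [y' ey] := nbP (noiso y).
  have n0 : forall z : T, z \notin set0 by move=> z; rewrite in_set0.
  have H := NC_SC_conn sg (SCall set0) ex ey (n0 _) (n0 _) (n0 _) (n0 _).
  by apply: (connect_sub _ H) => a b /and3P [h _ _]; exact: connect1 h.
split => //; rewrite leqNgt; apply/negP => cI.
have symI : symmetric (eI e).
  by move=> a b; rewrite /eI /= sym; congr (_ && _); exact: andbC.
have [x [y1 [y2 [h1 h2 y12]]]] := deg2 symI (fun a b aI bI => eI_conn sym (conn a b) aI bI) cI.
move: h1 h2; rewrite /eI /= => /and3P [e1 _ y1I] /and3P [e2 _ y2I].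
have [z1 [ez1 z1x]] := other_nb x y1I; have [z2 [ez2 z2x]] := other_nb x y2I.
have y1x : y1 \notin [set x] by rewrite inE; apply/eqP => E; move: e1; rewrite E irr.
have y2x : y2 \notin [set x] by rewrite inE; apply/eqP => E; move: e2; rewrite E irr.
have z1x' : z1 \notin [set x] by rewrite inE.
have z2x' : z2 \notin [set x] by rewrite inE.
have H := NC_SC_conn sg (SCall [set x]) ez1 ez2 y1x z1x' y2x z2x'.
exact: forest_contra sg fo e1 e2 y12 H.
Qed.


Definition Jc (T : finType) (G Y : {set T}) : complex T :=
  [set S : {set T} | (S \subset G) && ~~ (Y \subset S)].

Lemma powerset_facet (T : finType) (A F : {set T}) : is_facet (powerset A) F -> F = A.
Proof.
move=> /facetP [FA Fmax]; rewrite powersetE in FA.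
by apply/esym/Fmax => //; rewrite powersetE.
Qed.

Lemma J_VD (T : finType) n : forall G Y : {set T}, #|Y| = n.+1 -> Y \subset G ->
  vertex_decomposable (Jc G Y).
Proof.
elim: n => [|n IH] G Y cY YG.
  have [y Ey] := cards1P (introT eqP cY).
  apply: vd_simplex; exists (G :\ y); apply/setP => S.
  by rewrite inE powersetE subsetD1 Ey sub1set.
have [y yY] : exists y, y \in Y by apply/card_gt0P; rewrite cY.
have yG : y \in G by move/subsetP: YG; apply.
have Hl : link y (Jc G Y) = Jc (G :\ y) (Y :\ y).
  apply/setP => t; rewrite !inE subsetD1 subDset subUset sub1set yG /=.
  case tG: (t \subset G) => //=; case yt: (y \in t) => //=.
  rewrite ?andbT ?andbF //=.
  case: (boolP (Y \subset y |: t)) => H; rewrite ?andbF //= andbT.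
  by apply/negP => Yt; move/negP: H; apply; apply: subset_trans Yt _; apply: subsetUr.
have Hd : deletion y (Jc G Y) = powerset (G :\ y).
  apply/setP => t; rewrite !inE subsetD1.
  case tG: (t \subset G) => //=; case yt: (y \in t); rewrite ?andbF ?andbT //=.
  apply/negP => /subsetP /(_ y yY); by rewrite yt.
apply: (@vd_shed _ (Jc G Y) y).
- rewrite inE sub1set yG /=; apply/negP => /subset_leq_card; by rewrite cards1 cY.
- rewrite Hl; apply: IH; last by apply: setSD.
  by move: cY; rewrite (cardsD1 y Y) yY add1n => [[]].
- by rewrite Hd; apply: vd_simplex; exists (G :\ y).
- rewrite Hd => F /powerset_facet ->; apply/facetP; split.
    rewrite inE subsetDl /=; apply/negP => /subsetP /(_ y yY); by rewrite !inE eqxx.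
  move=> H; rewrite inE => /andP [HG YH] GH.
  apply/eqP; rewrite eq_sym eqEsubset GH /= subsetD1 HG /=.
  apply/negP => yH; move/negP: YH; apply; apply: subset_trans YG _.
  apply/subsetP => z zG; case: (eqVneq z y) => [->//|zy].
  by move/subsetP: GH; apply; rewrite !inE zy.
Qed.

Lemma J_facet (T : finType) (G Y F : {set T}) :
  is_facet (Jc G Y) F -> exists2 y, y \in Y & F = G :\ y.
Proof.
move=> /facetP [FJ Fmax]; move: (FJ); rewrite inE => /andP [FG /subsetPn [y yY yF]].
exists y => //; apply/esym/Fmax.
  rewrite inE subsetDl /=; apply/negP => /subsetP /(_ y yY); by rewrite !inE eqxx.
by rewrite subsetD1 FG yF.
Qed.

Lemma lkS0 (T : finType) (K : complex T) : lkS set0 K = K.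
Proof.
apply/setP => t; rewrite inE setU0.
case: (t \in K) => //=; rewrite andbT; apply/subsetP => x; by rewrite !inE.
Qed.

Lemma J_VD' (T : finType) (G Y : {set T}) : 0 < #|Y| -> Y \subset G ->
  vertex_decomposable (Jc G Y).
Proof. by move=> cY; apply: (@J_VD _ (#|Y|.-1)); rewrite prednK. Qed.

Lemma VD_star (T : finType) (e : rel T) c :
  simple_graph e -> (forall x y, e x y -> (x == c) || (y == c)) -> 0 < #|nbhd e c| ->
  vertex_decomposable (non_cover_complex e).
Proof.
move=> [sym irr] Hc cN.
have -> : non_cover_complex e = Jc (~: [set c]) (nbhd e c).
  apply/setP => S; rewrite [in RHS]inE; apply/NCP/andP.
  - move=> [x [y [exy xS yS]]]; case/orP: (Hc x y exy) => /eqP E; subst.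
      split; first by apply/subsetP => z zS; rewrite !inE; apply/eqP => E; move: xS; rewrite -E zS.
      by apply/subsetPn; exists y; rewrite // inE.
    split; first by apply/subsetP => z zS; rewrite !inE; apply/eqP => E; move: yS; rewrite -E zS.
    by apply/subsetPn; exists x; rewrite // inE sym.
  - move=> [/subsetP Sc /subsetPn [w wN wS]]; exists c, w; split => //.
      by rewrite inE in wN.
    by apply/negP => /Sc; rewrite !inE eqxx.
apply: J_VD' => //; apply/subsetP => w; rewrite !inE => cw; apply/eqP => E.
by move: cw; rewrite E irr.
Qed.

Lemma in_link (T : finType) (K : complex T) v (t : {set T}) :
  (t \in link v K) = [&& t \in K, v \notin t & v |: t \in K].
Proof. by rewrite inE. Qed.

Lemma in_del (T : finType) (K : complex T) v (t : {set T}) :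
  (t \in deletion v K) = (t \in K) && (v \notin t).
Proof. by rewrite inE. Qed.

Lemma in_Jc (T : finType) (G Y t : {set T}) :
  (t \in Jc G Y) = (t \subset G) && ~~ (Y \subset t).
Proof. by rewrite inE. Qed.

Lemma VD_dstar (T : finType) (e : rel T) a b :
  simple_graph e -> e a b ->
  (forall x y, e x y -> [|| x == a, x == b, y == a | y == b]) ->
  (exists w, e b w /\ w != a) ->
  vertex_decomposable (non_cover_complex e).
Proof.
move=> sg eab Hc [w0 [ebw0 w0a]]; have [sym irr] := sg.
have ab : a != b by apply/eqP => E; move: eab; rewrite E irr.
have ba : b != a by rewrite eq_sym.
have NCE : forall S : {set T}, [exists x, exists y, [&& e x y, x \notin S & y \notin S]] = (S \in non_cover_complex e).
  by move=> S; rewrite inE.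
have Hl : link a (non_cover_complex e) = Jc (~: [set a; b]) (nbhd e b :\ a).
  apply/setP => t; rewrite ?in_link ?in_del in_Jc; apply/idP/idP.
  - case/and3P => _ at_ /NCP [x [y [exy xt yt]]].
    move: xt yt; rewrite !inE !negb_or => /andP [xa xt] /andP [ya yt].
    have [xb|yb] : x == b \/ y == b.
      case/or4P: (Hc x y exy) => H; [by move: xa; rewrite H | by left | by move: ya; rewrite H | by right].
    + rewrite (eqP xb) in exy xt; apply/andP; split.
        apply/subsetP => z zt; rewrite !inE negb_or; apply/andP; split.
          by apply/eqP => E; move: at_; rewrite -E zt.
        by apply/eqP => E; move: xt; rewrite -E zt.
      by apply/subsetPn; exists y; rewrite // !inE ya exy.
    + rewrite (eqP yb) in exy yt; apply/andP; split.
        apply/subsetP => z zt; rewrite !inE negb_or; apply/andP; split.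
          by apply/eqP => E; move: at_; rewrite -E zt.
        by apply/eqP => E; move: yt; rewrite -E zt.
      by apply/subsetPn; exists x; rewrite // !inE xa sym exy.
  - case/andP => /subsetP tab /subsetPn [w wN wt].
    rewrite !inE in wN; case/andP: wN => wa ebw.
    have at_ : a \notin t by apply/negP => /tab; rewrite !inE eqxx.
    have bt : b \notin t by apply/negP => /tab; rewrite !inE eqxx orbT.
    apply/and3P; split => //.
      by apply/NCP; exists b, w.
    by apply/NCP; exists b, w; rewrite !inE negb_or ba bt negb_or wa wt.
have Hd : deletion a (non_cover_complex e) = Jc (~: [set a]) (nbhd e a).
  apply/setP => t; rewrite ?in_link ?in_del in_Jc; apply/idP/idP.
  - case/andP => /NCP [x [y [exy xt yt]]] at_.
    have sub : t \subset ~: [set a].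
      by apply/subsetP => z zt; rewrite !inE; apply/eqP => E; move: at_; rewrite -E zt.
    rewrite sub /=; apply/subsetPn.
    case/or4P: (Hc x y exy) => /eqP E; subst.
    + by exists y; rewrite // inE.
    + by exists b; rewrite // ?inE //; apply/negP => bt; by [].
    + by exists x; rewrite // inE sym.
    + by exists b; rewrite // inE.
  - case/andP => /subsetP ta /subsetPn [w wN wt].
    have at_ : a \notin t by apply/negP => /ta; rewrite !inE eqxx.
    rewrite at_ andbT.
    by apply/NCP; exists a, w; rewrite // inE in wN.
apply: (@vd_shed _ _ a).
- by apply/NCP; exists b, w0; rewrite !inE ba w0a.
- rewrite Hl; apply: J_VD'.
    by apply/card_gt0P; exists w0; rewrite !inE w0a.
  apply/subsetP => w; rewrite !inE negb_or => /andP [wa ebw]; rewrite wa /=.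
  by apply/eqP => E; move: ebw; rewrite E irr.
- rewrite Hd; apply: J_VD'.
    by apply/card_gt0P; exists b; rewrite inE.
  by apply/subsetP => w; rewrite !inE => eaw; apply/eqP => E; move: eaw; rewrite E irr.
- rewrite Hd => F /J_facet [y]; rewrite inE => eay ->.
  have -> : ~: [set a] :\ y = ~: (set0 :|: [set a; y]).
    by apply/setP => z; rewrite !inE /= negb_or andbC.
  have ay : a \notin set0 by rewrite inE.
  have yy : y \notin set0 by rewrite inE.
  by have := NC_lk_mk sg eay ay yy; rewrite lkS0.
Qed.


Lemma leaf_nb (T : finType) (e : rel T) x y w :
  x \notin internal_vertices e -> e x y -> e x w -> w = y.
Proof.
rewrite inE -leqNgt => d1 exy exw.
by apply: (card_le1_eq d1); rewrite inE.
Qed.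

Lemma leaf_edge_all (T : finType) (e : rel T) x y :
  symmetric e -> connected_graph e -> e x y ->
  x \notin internal_vertices e -> y \notin internal_vertices e ->
  forall z, (z == x) || (z == y).
Proof.
move=> sym conn exy xI yI z.
have : z \in [set x; y].
  apply: (closure_conn _ (setU11 x _) (conn x z)) => p q; rewrite !inE.
  case/orP => /eqP -> epq.
    by rewrite (leaf_nb xI exy epq) eqxx orbT.
  have eyx : e y x by rewrite sym.
  by rewrite (leaf_nb yI eyx epq) eqxx.
by rewrite !inE.
Qed.

Lemma ifdir (T : finType) (e : rel T) :
  simple_graph e -> 0 < #|T| -> no_isolated e -> connected_graph e ->
  #|internal_vertices e| <= 2 -> vertex_decomposable (non_cover_complex e).
Proof.
move=> sg cT noiso conn cI; have [sym irr] := sg.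
set I := internal_vertices e.
have [x0 _] := card_gt0P cT.
have [y0 e0] := nbP (noiso x0).
case: (boolP [exists u, exists w, [&& e u w, u \notin I & w \notin I]]).
  case/existsP => u /existsP [w /and3P [euw uI wI]].
  have all2 := leaf_edge_all sym conn euw uI wI.
  apply: (@VD_star _ _ u) => //.
    move=> p q epq; case/orP: (all2 p) => [->//|/eqP Ep].
    case/orP: (all2 q) => [->|/eqP Eq]; rewrite ?orbT //.
    by move: epq; rewrite Ep Eq irr.
  by apply/card_gt0P; exists w; rewrite inE.
rewrite negb_exists => /forallP Hn.
have edgeI : forall p q, e p q -> (p \in I) || (q \in I).
  move=> p q epq; move: (Hn p); rewrite negb_exists => /forallP /(_ q).
  by rewrite epq /= negb_and !negbK.
have [c cIn] : exists c, c \in I.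
  by case/orP: (edgeI _ _ e0) => ?; [exists x0|exists y0].
case: (boolP [forall z in I, z == c]) => [/forall_inP onlyc | ].
  apply: (@VD_star _ _ c) => //.
    by move=> p q epq; case/orP: (edgeI _ _ epq) => /onlyc ->; rewrite ?orbT.
  by rewrite inE in cIn; apply: leq_trans cIn.
rewrite negb_forall_in => /existsP [d /andP [dI dc]].
have inI : forall z, z \in I -> (z == c) || (z == d).
  move=> z zI; apply/negPn/negP; rewrite negb_or => /andP [zc zd].
  have : z |: [set c; d] \subset I.
    by apply/subsetP => t; rewrite !in_setU !in_set1 => /or3P [] /eqP ->.
  move/subset_leq_card; rewrite cardsU1 cards2 !inE negb_or zc zd eq_sym dc /=.
  by move=> H; move: (leq_trans H cI).
have Hc : forall x y, e x y -> [|| x == c, x == d, y == c | y == d].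
  move=> x y exy; case/orP: (edgeI _ _ exy) => /inI /orP [] ->; by rewrite ?orbT.
have ecd : e c d.
  apply/negPn/negP => necd.
  have : d \in c |: nbhd e c.
    apply: (closure_conn _ (setU11 c _) (conn c d)) => p q; rewrite !inE.
    case/orP => [/eqP -> ->|ecp epq]; first by rewrite orbT.
    have pI : p \notin I.
      apply/negP => /inI /orP [] /eqP E; move: ecp; rewrite E ?irr //.
      by move=> ecd'; move/negP: necd.
    have epc : e p c by rewrite sym.
    by rewrite (leaf_nb pI epq epc) eqxx.
  rewrite !inE (negbTE necd) orbF => /eqP E; by move: dc; rewrite E eqxx.
apply: (@VD_dstar _ _ c d) => //.
exact: other_nb.
Qed.

Theorem theorem4p5 (T : finType) (e : rel T) :
  simple_graph e -> is_forest e -> 0 < #|T| -> no_isolated e ->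
  (vertex_decomposable (non_cover_complex e) <->
   connected_graph e /\ #|internal_vertices e| <= 2).
Proof.
move=> sg fo cT noiso; split.
  exact: onlyif.
by case=> conn cI; exact: ifdir.
Qed.
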